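(* Let $\mathcal{H}$ be a complex Hilbert space, let $N(\cdot)$ be a weakly unitarily invariant algebra norm on $\mathbb{B}(\mathcal{H})$, and let $T$ and $S$ be self-adjoint operators in $\mathbb{B}(\mathcal{H})$ with $\|T\|\le 1$ and $\|S\|\le 1$. Then, for each choice of sign, $$w_{N}(TS \pm ST) \leq \min\{w_{N}(T), w_{N}(S)\}\sup_{U\in\mathcal{U}}\big\{N(U) + N(U^* )\big\}.$$ In particular, if $N(\cdot)$ is a weakly unitarily invariant self-adjoint algebra norm, then $$w_{N}(TS \pm ST) \leq 2\min\{N(T), N(S)\}\sup_{U\in\mathcal{U}}N(U).$$
   Context: $\mathbb{B}(\mathcal{H})$ is the algebra of bounded linear operators on $\mathcal{H}$, $\|\cdot\|$ the usual operator norm, and $\mathcal{U}$ the group of unitary operators in $\mathbb{B}(\mathcal{H})$. A norm $N(\cdot)$ on $\mathbb{B}(\mathcal{H})$ is an algebra norm if $N(TS)\le N(T)N(S)$ for all $T,S$; self-adjoint if $N(T^* )=N(T)$ for all $T$; weakly unitarily invariant if $N(U^*TU)=N(T)$ for all $T\in\mathbb{B}(\mathcal{H})$, $U\in\mathcal{U}$. For $A\in\mathbb{B}(\mathcal{H})$, ${\rm Re}(A)=\frac{A+A^*}{2}$. The generalized numerical radius is $w_N(T)=\sup_{\theta\in\mathbb{R}} N\big({\rm Re}(e^{i\theta}T)\big)$. *)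

(* Defs.v *)
From HB Require Import structures.
From mathcomp Require Import all_boot all_order all_algebra.
From mathcomp Require Import complex.
From mathcomp Require Import boolp classical_sets reals ereal trigo.
Set Implicit Arguments. Unset Strict Implicit. Unset Printing Implicit Defensive.
Import Order.TTheory GRing.Theory Num.Theory.
Local Open Scope ring_scope.
Local Open Scope classical_set_scope.

Section Hilbert.
Variable R : realType.
Local Notation C := R[i].
Variables (V : lmodType C) (ip : V -> V -> C).

Definition hnorm (x : V) : R := Num.sqrt (complex.Re (ip x x)).

Definition is_hilbert : Prop :=
  [/\ (forall (a : C) (x y z : V), ip (a *: x + y) z = a * ip x z + ip y z),
      (forall x y : V, ip y x = conjc (ip x y)),
      (forall x : V, 0 <= complex.Re (ip x x)),
      (forall x : V, ip x x = 0 -> x = 0) &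
      (forall u : nat -> V,
         (forall e : R, 0 < e -> exists n0 : nat, forall m n : nat,
            (n0 <= m)%N -> (n0 <= n)%N -> hnorm (u m - u n) < e) ->
         exists l : V, forall e : R, 0 < e -> exists n0 : nat, forall n : nat,
            (n0 <= n)%N -> hnorm (u n - l) < e)].

Definition bounded_op (T : V -> V) : Prop :=
  (forall (a : C) (x y : V), T (a *: x + y) = a *: T x + T y) /\
  exists M : R, forall x : V, hnorm (T x) <= M * hnorm x.

Definition opnorm (T : V -> V) : R :=
  sup [set hnorm (T x) | x in [set x : V | hnorm x <= 1]].

Definition adjoint (T : V -> V) : V -> V :=
  match pselect (exists S : V -> V, forall x y : V, ip (T x) y = ip x (S y))
  with
  | left h => projT1 (cid h)
  | right _ => T
  end.

Definition op_add (T S : V -> V) : V -> V := fun x => T x + S x.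
Definition op_sub (T S : V -> V) : V -> V := fun x => T x - S x.
Definition op_scale (a : C) (T : V -> V) : V -> V := fun x => a *: T x.
Definition op_comp (T S : V -> V) : V -> V := fun x => T (S x).

Definition self_adjoint_op (T : V -> V) : Prop := adjoint T = T.

Definition unitary (U : V -> V) : Prop :=
  bounded_op U /\ op_comp (adjoint U) U = id /\ op_comp U (adjoint U) = id.

Definition ReOp (A : V -> V) : V -> V := op_scale (2%:R^-1) (op_add A (adjoint A)).

Definition is_norm_on_B (N : (V -> V) -> R) : Prop :=
  [/\ (forall T, bounded_op T -> 0 <= N T),
      (forall T, bounded_op T -> N T = 0 -> T = (fun _ => 0)),
      (forall (a : C) T, bounded_op T -> N (op_scale a T) = Normc.normc a * N T) &
      (forall T S, bounded_op T -> bounded_op S -> N (op_add T S) <= N T + N S)].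

Definition algebra_norm (N : (V -> V) -> R) : Prop :=
  is_norm_on_B N /\
  forall T S, bounded_op T -> bounded_op S -> N (op_comp T S) <= N T * N S.

Definition self_adjoint_norm (N : (V -> V) -> R) : Prop :=
  forall T, bounded_op T -> N (adjoint T) = N T.

Definition weakly_unitarily_invariant (N : (V -> V) -> R) : Prop :=
  forall T U, bounded_op T -> unitary U ->
    N (op_comp (adjoint U) (op_comp T U)) = N T.

Definition expi (t : R) : C := (cos t +i* sin t)%C.

Definition wN (N : (V -> V) -> R) (T : V -> V) : \bar R :=
  ereal_sup [set (N (ReOp (op_scale (expi t) T)))%:E | t in [set: R]].

Definition supU_sum (N : (V -> V) -> R) : \bar R :=
  ereal_sup [set (N U + N (adjoint U))%:E | U in unitary].

Definition supU (N : (V -> V) -> R) : \bar R :=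
  ereal_sup [set (N U)%:E | U in unitary].

End Hilbert.

(* Main.v *)
Require Import Defs.
From HB Require Import structures.
From mathcomp Require Import all_boot all_order all_algebra.
From mathcomp Require Import complex.
From mathcomp Require Import boolp classical_sets reals ereal trigo.
From mathcomp Require Import ring lra zify.
Import Order.TTheory GRing.Theory Num.Theory.
Local Open Scope ring_scope.

Section Reals.
Variable R : realType.

Lemma nat_big (r : R) : exists n : nat, r < n%:R.
Proof.
exists (Num.Def.archi_bound `|r|).
exact: le_lt_trans (ler_norm r) (archi_boundP (normr_ge0 r)).
Qed.

Lemma inv_small (e : R) : 0 < e -> exists n0 : nat, forall n : nat, (n0 <= n)%N -> (n.+1%:R)^-1 < e.
Proof.
move=> e0; have [n0 hn0] := nat_big e^-1; exists n0 => n hn.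
rewrite -[e]invrK ltf_pV2 ?posrE ?invr_gt0 ?ltr0Sn //.
apply: lt_le_trans hn0 _; rewrite ler_nat; lia.
Qed.

Lemma zero_small (r K : R) : (forall e, 0 < e -> `|r| <= K * e) -> r = 0.
Proof.
move=> h; apply/eqP; apply/negPn/negP => rn0.
have rp : 0 < `|r| by rewrite normr_gt0.
have Kp : 0 < `|K| + 1 by rewrite ltr_wpDl.
have := h (`|r| / (2 * (`|K| + 1))) (divr_gt0 rp (mulr_gt0 (ltr0Sn _ 1) Kp)).
have hK := ler_norm K; have hK0 := normr_ge0 K.
set q := `|r| / _.
have hq : q * (2 * (`|K| + 1)) = `|r| by rewrite /q mulfVK // gt_eqF // mulr_gt0.
have q0 : 0 < q by rewrite /q divr_gt0 // mulr_gt0.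
nra.
Qed.

Lemma le_small (r K : R) : (forall e, 0 < e -> e <= 1 -> r <= K * e) -> r <= 0.
Proof.
move=> h; rewrite leNgt; apply/negP => rp.
have Kp : 0 < `|K| + 1 by rewrite ltr_wpDl.
have hK := ler_norm K; have hK0 := normr_ge0 K.
pose q := Num.min 1 (r / (2 * (`|K| + 1))).
have q0 : 0 < q by rewrite /q lt_min ltr01 /= divr_gt0 // mulr_gt0.
have q1 : q <= 1 by rewrite /q ge_min lexx.
have q2 : q * (2 * (`|K| + 1)) <= r.
  by rewrite -ler_pdivlMr ?mulr_gt0 // /q ge_min lexx orbT.
have := h q q0 q1; nra.
Qed.


Definition rate (n : nat) : R := (n.+1%:R)^-1.

Lemma rate_gt0 n : 0 < rate n.
Proof. by rewrite /rate invr_gt0 ltr0Sn. Qed.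

Lemma rate_mono n m : (n <= m)%N -> rate m <= rate n.
Proof. by move=> h; rewrite /rate lef_pV2 ?posrE ?ltr0Sn // ler_nat. Qed.

Lemma rate_small (K e : R) : 0 < e -> exists n0, forall n, (n0 <= n)%N -> K * rate n < e.
Proof.
move=> e0; have Kp : 0 < `|K| + 1 by rewrite ltr_wpDl.
have [n0 hn0] := inv_small _ (divr_gt0 e0 Kp); exists n0 => n hn.
have h := hn0 n hn; have r0 := rate_gt0 n; rewrite -/(rate n) in h.
have hK := ler_norm K; have hK0 := normr_ge0 K.
have : (`|K| + 1) * rate n < e by rewrite -ltr_pdivlMl // mulrC.
nra.
Qed.

Lemma real_rate_le (r a K : R) : (forall n, r <= a + K * rate n) -> r <= a.
Proof.
move=> h; rewrite -subr_le0; apply: (@le_small _ 1) => e e0 _.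
have [n hn] := rate_small K _ e0; have := h n; have := hn n (leqnn n).
lra.
Qed.

Lemma real_rate0 (r K : R) : (forall n, `|r| <= K * rate n) -> r = 0.
Proof.
move=> h; apply: (@zero_small _ 1) => e e0.
have [n hn] := rate_small K _ e0; have := h n; have := hn n (leqnn n); lra.
Qed.

Lemma half_id (b : R) : 1 - 2^-1 * (1 + b ^+ 2) = (1 - b) - 2^-1 * (1 - b) ^+ 2.
Proof. by field. Qed.

End Reals.
Arguments half_id {R}.
Arguments rate {R}. Arguments rate_gt0 {R}. Arguments rate_mono {R}. Arguments rate_small {R}. Arguments real_rate_le {R}. Arguments real_rate0 {R}.
Section EFin.
Variable R : realType.
Local Open Scope ereal_scope.

Lemma efin1 (wA wT wS X : \bar R) (nA nT nS s1 s2 : R) :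
  wA <= nA%:E -> (nA <= nT * s1)%R -> (nA <= nS * s2)%R -> (0 <= nT)%R -> (0 <= nS)%R ->
  (0 <= s1)%R -> (0 <= s2)%R ->
  nT%:E <= wT -> nS%:E <= wS -> s1%:E <= X -> s2%:E <= X ->
  wA <= Order.min wT wS * X.
Proof.
move=> h0 h1 h2 p1 p2 p3 p4 t s x1 x2.
case: (leP wT wS) => _.
  apply: le_trans h0 _; apply: (@le_trans _ _ (nT * s1)%:E); first by rewrite lee_fin.
  by rewrite EFinM; apply: lee_pmul => //; rewrite lee_fin.
apply: le_trans h0 _; apply: (@le_trans _ _ (nS * s2)%:E); first by rewrite lee_fin.
by rewrite EFinM; apply: lee_pmul => //; rewrite lee_fin.
Qed.

Lemma efin2 (wA Y : \bar R) (nA nT nS u1 u2 : R) :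
  wA <= nA%:E -> (nA <= nT * (2 * u1))%R -> (nA <= nS * (2 * u2))%R -> (0 <= nT)%R -> (0 <= nS)%R ->
  (0 <= u1)%R -> (0 <= u2)%R -> u1%:E <= Y -> u2%:E <= Y ->
  wA <= 2%:E * (Order.min nT nS)%:E * Y.
Proof.
move=> h0 h1 h2 p1 p2 p3 p4 y1 y2.
case: (leP nT nS) => _.
  apply: le_trans h0 _; apply: (@le_trans _ _ ((2 * nT) * u1)%:E).
    by rewrite lee_fin -mulrA mulrCA.
  rewrite -EFinM (EFinM (2 * nT) u1); apply: lee_pmul => //; rewrite lee_fin //; exact: mulr_ge0.
apply: le_trans h0 _; apply: (@le_trans _ _ ((2 * nS) * u2)%:E).
  by rewrite lee_fin -mulrA mulrCA.
rewrite -EFinM (EFinM (2 * nS) u2); apply: lee_pmul => //; rewrite lee_fin //; exact: mulr_ge0.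
Qed.

End EFin.

Section Lin.
Context {R : realType} {V : lmodType R[i]}.

Definition lin (T : V -> V) := forall a x y, T (a *: x + y) = a *: T x + T y.

Lemma lin0 T : lin T -> T 0 = 0.
Proof. move=> h; have := h 1 0 0; rewrite !scale1r !addr0 => h'. by apply: (addrI (T 0)); rewrite addr0 -h'. Qed.

Lemma linD T : lin T -> forall x y, T (x + y) = T x + T y.
Proof. by move=> h x y; have := h 1 x y; rewrite !scale1r. Qed.

Lemma linZ T : lin T -> forall a x, T (a *: x) = a *: T x.
Proof. by move=> h a x; have := h a x 0; rewrite !addr0 lin0 // addr0. Qed.

Lemma linN T : lin T -> forall x, T (- x) = - T x.
Proof. by move=> h x; rewrite -scaleN1r linZ // scaleN1r. Qed.

Lemma linB T : lin T -> forall x y, T (x - y) = T x - T y.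
Proof. by move=> h x y; rewrite linD // linN. Qed.

Lemma lin_comp T S : lin T -> lin S -> lin (fun x => T (S x)).
Proof. by move=> hT hS a x y; rewrite hS hT. Qed.

Lemma lin_add T S : lin T -> lin S -> lin (fun x => T x + S x).
Proof. by move=> hT hS a x y; rewrite hT hS scalerDr addrACA. Qed.

Lemma lin_sub T S : lin T -> lin S -> lin (fun x => T x - S x).
Proof. by move=> hT hS a x y; rewrite hT hS scalerBr opprD addrACA. Qed.

Lemma lin_scale c T : lin T -> lin (fun x => c *: T x).
Proof. by move=> hT a x y; rewrite hT scalerDr !scalerA mulrC. Qed.

Lemma lin_id : lin id.
Proof. by []. Qed.

Lemma lin_zero : lin (fun _ => 0).
Proof. by move=> a x y; rewrite scaler0 addr0. Qed.

End Lin.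
Arguments linD {R V T}. Arguments linZ {R V T}. Arguments linN {R V T}. Arguments linB {R V T}. Arguments lin0 {R V T}.

Section H.
Local Open Scope complex_scope.
Variable R : realType.
Local Notation C := R[i].
Variables (V : lmodType C) (ip : V -> V -> C).
Hypothesis ipDZl : forall (a : C) (x y z : V), ip (a *: x + y) z = a * ip x z + ip y z.
Hypothesis ipC : forall x y : V, ip y x = conjc (ip x y).
Hypothesis ip_ge0 : forall x : V, 0 <= complex.Re (ip x x).
Hypothesis ip_eq0 : forall x : V, ip x x = 0 -> x = 0.
Hypothesis complete : forall u : nat -> V,
  (forall e : R, 0 < e -> exists n0 : nat, forall m n : nat,
     (n0 <= m)%N -> (n0 <= n)%N -> hnorm ip (u m - u n) < e) ->
  exists l : V, forall e : R, 0 < e -> exists n0 : nat, forall n : nat,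
     (n0 <= n)%N -> hnorm ip (u n - l) < e.

Lemma ceq (z w : C) : complex.Re z = complex.Re w -> complex.Im z = complex.Im w -> z = w.
Proof. by case: z => a b; case: w => c d /= -> ->. Qed.

Lemma ReD (a b : C) : complex.Re (a + b) = complex.Re a + complex.Re b.
Proof. by case: a; case: b. Qed.
Lemma ReN (a : C) : complex.Re (- a) = - complex.Re a.
Proof. by case: a. Qed.
Lemma ImD (a b : C) : complex.Im (a + b) = complex.Im a + complex.Im b.
Proof. by case: a; case: b. Qed.
Lemma ImN (a : C) : complex.Im (- a) = - complex.Im a.
Proof. by case: a. Qed.

Lemma ipD x y z : ip (x + y) z = ip x z + ip y z.
Proof. by have := ipDZl 1 x y z; rewrite scale1r mul1r. Qed.

Lemma ip0l z : ip 0 z = 0.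
Proof. have h := ipD 0 0 z; rewrite addr0 in h. by apply: (addrI (ip 0 z)); rewrite addr0 -h. Qed.

Lemma ipZ a x z : ip (a *: x) z = a * ip x z.
Proof. by rewrite -[a *: x]addr0 ipDZl ip0l addr0. Qed.

Lemma ipN x z : ip (- x) z = - ip x z.
Proof. by rewrite -scaleN1r ipZ mulN1r. Qed.

Lemma ipB x y z : ip (x - y) z = ip x z - ip y z.
Proof. by rewrite ipD ipN. Qed.

Lemma ipDr x y z : ip z (x + y) = ip z x + ip z y.
Proof. by rewrite ipC ipD rmorphD /= -!ipC. Qed.

Lemma ipZr a x z : ip z (a *: x) = conjc a * ip z x.
Proof. by rewrite ipC ipZ rmorphM /= -ipC. Qed.

Lemma ip0r z : ip z 0 = 0.
Proof. by rewrite ipC ip0l; apply: ceq => /=; rewrite ?oppr0. Qed.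

Lemma ipNr x z : ip z (- x) = - ip z x.
Proof. by rewrite -scaleN1r ipZr; apply: ceq; case: (ip z x) => a b /=; simpc. Qed.

Lemma ipBr x y z : ip z (x - y) = ip z x - ip z y.
Proof. by rewrite ipDr ipNr. Qed.

Definition rip x y := complex.Re (ip x y).
Definition ns x := rip x x.

Lemma ipxx_Im x : complex.Im (ip x x) = 0.
Proof. have := ipC x x; case: (ip x x) => a b /= [] /eqP; rewrite -subr_eq0 opprK -mulr2n mulrn_eq0 /= => /eqP. done. Qed.


Lemma ipxx x : ip x x = (ns x)%:C.
Proof. by apply: ceq => //=; rewrite ipxx_Im. Qed.

Lemma ns_ge0 x : 0 <= ns x.
Proof. exact: ip_ge0. Qed.

Lemma ripC x y : rip x y = rip y x.
Proof. by rewrite /rip (ipC x y); case: (ip x y). Qed.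

Lemma ripDl x y z : rip (x + y) z = rip x z + rip y z.
Proof. by rewrite /rip ipD ReD. Qed.

Lemma ripDr x y z : rip z (x + y) = rip z x + rip z y.
Proof. by rewrite /rip ipDr ReD. Qed.

Lemma ripNl x z : rip (- x) z = - rip x z.
Proof. by rewrite /rip ipN ReN. Qed.

Lemma ripNr x z : rip z (- x) = - rip z x.
Proof. by rewrite /rip ipNr ReN. Qed.

Lemma ripZl (r : R) x z : rip (r%:C *: x) z = r * rip x z.
Proof. by rewrite /rip ipZ; case: (ip x z) => a b /=; rewrite mul0r subr0. Qed.

Lemma ripZr (r : R) x z : rip z (r%:C *: x) = r * rip z x.
Proof. by rewrite ripC ripZl ripC. Qed.

Lemma nsD x y : ns (x + y) = ns x + 2 * rip x y + ns y.
Proof. rewrite /ns ripDl !ripDr (ripC y x); ring. Qed.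

Lemma nsB x y : ns (x - y) = ns x - 2 * rip x y + ns y.
Proof. rewrite nsD ripNr /ns ripNl ripNr opprK; ring. Qed.

Lemma nsZ a x : ns (a *: x) = (complex.Re a ^+ 2 + complex.Im a ^+ 2) * ns x.
Proof.
rewrite /ns /rip ipZ ipZr ipxx; case: a => a b /=.
ring.
Qed.

Lemma ns_eq0 x : ns x = 0 -> x = 0.
Proof. by move=> h; apply: ip_eq0; rewrite ipxx h. Qed.

Lemma ns0 : ns 0 = 0.
Proof. by rewrite /ns /rip ip0l. Qed.

Lemma CS x y : rip x y ^+ 2 <= ns x * ns y.
Proof.
have [y0|ypos] := eqVneq (ns y) 0.
  by rewrite (ns_eq0 y y0) /rip ip0r /= expr0n /= ns0 mulr0.
have h := ns_ge0 ((ns y)%:C *: x - (rip x y)%:C *: y).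
rewrite nsB !nsZ ripZl ripZr /= in h.
have yp : 0 < ns y by rewrite lt_neqAle eq_sym ypos ns_ge0.
rewrite -subr_ge0; rewrite -(pmulr_rge0 _ yp).
move: h; rewrite ?expr0n /= ?addr0.
move=> h; nra.
Qed.

Lemma hnE x : hnorm ip x = Num.sqrt (ns x).
Proof. by []. Qed.

Lemma hn_ge0 x : 0 <= hnorm ip x.
Proof. exact: sqrtr_ge0. Qed.

Lemma hn_sq x : hnorm ip x ^+ 2 = ns x.
Proof. by rewrite hnE sqr_sqrtr // ns_ge0. Qed.

Lemma abs_rip x y : `|rip x y| <= hnorm ip x * hnorm ip y.
Proof.
have h := CS x y; rewrite -!hn_sq in h.
have h1 := hn_ge0 x; have h2 := hn_ge0 y.
have h3 : `|rip x y| ^+ 2 = rip x y ^+ 2 by rewrite real_normK // num_real.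
have h4 := normr_ge0 (rip x y).
rewrite -(@ler_pXn2r _ 2) // ?nnegrE ?mulr_ge0 // h3 exprMn //.
Qed.

Lemma rip_le x y : rip x y <= hnorm ip x * hnorm ip y.
Proof. exact: le_trans (ler_norm _) (abs_rip x y). Qed.

Lemma hnD x y : hnorm ip (x + y) <= hnorm ip x + hnorm ip y.
Proof.
have h := rip_le x y; have h1 := hn_ge0 x; have h2 := hn_ge0 y.
have h3 := hn_ge0 (x + y).
have : hnorm ip (x + y) ^+ 2 <= (hnorm ip x + hnorm ip y) ^+ 2.
  rewrite !hn_sq nsD -!hn_sq; nra.
nra.
Qed.

Lemma hnZ a x : hnorm ip (a *: x) = Normc.normc a * hnorm ip x.
Proof. by rewrite !hnE nsZ sqrtrM; case: a => a b //= ; rewrite addr_ge0 // sqr_ge0. Qed.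

Lemma hnN x : hnorm ip (- x) = hnorm ip x.
Proof. by rewrite -scaleN1r hnZ /Normc.normc /= oppr0 expr0n /= addr0 sqrrN expr1n sqrtr1 mul1r. Qed.

Lemma hnBC x y : hnorm ip (x - y) = hnorm ip (y - x).
Proof. by rewrite -hnN opprB. Qed.

Lemma hn0 : hnorm ip 0 = 0.
Proof. by rewrite hnE ns0 sqrtr0. Qed.

Lemma hn_eq0 x : hnorm ip x = 0 -> x = 0.
Proof. by move=> h; apply: ns_eq0; rewrite -hn_sq h expr0n. Qed.

Lemma Im_rip x y : complex.Im (ip x y) = rip x ('i%C *: y).
Proof. rewrite /rip ipZr; case: (ip x y) => a b /=. rewrite !mul0r; lra. Qed.

Lemma hn_i x : hnorm ip ('i%C *: x) = hnorm ip x.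
Proof. by rewrite hnZ /Normc.normc /= expr0n /= add0r expr1n sqrtr1 mul1r. Qed.

Lemma abs_Re_ip x y : `|complex.Re (ip x y)| <= hnorm ip x * hnorm ip y.
Proof. exact: abs_rip. Qed.

Lemma abs_Im_ip x y : `|complex.Im (ip x y)| <= hnorm ip x * hnorm ip y.
Proof. by rewrite Im_rip -(hn_i y); exact: abs_rip. Qed.


Lemma hn_lt_of_ns x (e : R) : 0 < e -> ns x < e ^+ 2 -> hnorm ip x < e.
Proof. by move=> e0 h; rewrite -(@ltr_pXn2r _ 2) ?nnegrE ?hn_ge0 ?ltW // hn_sq. Qed.

Lemma half_C : (2^-1 : R)%:C * (1 + 1) = 1 :> C.
Proof. by apply: ceq => /=; field. Qed.

Lemma RC_inv (r : R) : r != 0 -> (r^-1)%:C * r%:C = 1 :> C.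
Proof. by move=> r0; apply: ceq => /=; field. Qed.

Section Riesz.
Variable f : V -> C.
Variable M : R.
Hypothesis flin : forall a x y, f (a *: x + y) = a * f x + f y.
Hypothesis fbdd : forall x, `|complex.Re (f x)| <= M * hnorm ip x /\ `|complex.Im (f x)| <= M * hnorm ip x.

Lemma f0 : f 0 = 0.
Proof. have h := flin 1 0 0; rewrite scale1r addr0 mul1r in h. by apply: (addrI (f 0)); rewrite addr0 -h. Qed.

Lemma fD x y : f (x + y) = f x + f y.
Proof. by have := flin 1 x y; rewrite scale1r mul1r. Qed.

Lemma fZ a x : f (a *: x) = a * f x.
Proof. by have := flin a x 0; rewrite !addr0 f0 addr0. Qed.

Lemma fB x y : f (x - y) = f x - f y.
Proof. by rewrite fD -scaleN1r fZ mulN1r. Qed.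

Lemma fbRe x : `|complex.Re (f x)| <= `|M| * hnorm ip x.
Proof. apply: le_trans (proj1 (fbdd x)) _; apply: ler_wpM2r; [exact: hn_ge0 | exact: ler_norm]. Qed.

Lemma fbIm x : `|complex.Im (f x)| <= `|M| * hnorm ip x.
Proof. apply: le_trans (proj2 (fbdd x)) _; apply: ler_wpM2r; [exact: hn_ge0 | exact: ler_norm]. Qed.

Lemma riesz : exists z, forall x, f x = ip x z.
Proof.
have [fz|[x1 hx1]] : (forall x, f x = 0) \/ exists x, f x != 0.
  case: (pselect (exists x, f x != 0)) => [h|h]; [by right|left => x].
  by apply/eqP/negP => hx; apply h; exists x; apply/negP.
  by exists 0 => x; rewrite fz ip0r.
pose x2 := (f x1)^-1 *: x1.
have fx2 : f x2 = 1 by rewrite fZ mulVf.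
pose E : set R := fun r => exists x, f x = 1 /\ r = ns x.
have hlb : has_lbound E by exists 0 => r [x [_ ->]]; exact: ns_ge0.
have hE : has_inf E by split => //; exists (ns x2), x2.
pose d := inf E.
have dle : forall x, f x = 1 -> d <= ns x.
  by move=> x hx; apply: (ge_inf hlb); exists x.
have d0 : 0 <= d by apply: lb_le_inf; [exists (ns x2), x2 | move=> r [x [_ ->]]; exact: ns_ge0].
have sq : forall n : nat, exists x, f x = 1 /\ ns x < d + (n.+1%:R)^-1.
  move=> n; have hp : 0 < (n.+1%:R : R)^-1 by rewrite invr_gt0 ltr0Sn.
  have [r [x [hx ->]] hr] := @inf_adherent R E _ hp hE.
  by exists x.
have [xs hxs] := boolp.choice sq.
clearbody d.
have par : forall m n, ns (xs m - xs n) <= 2 * (m.+1%:R)^-1 + 2 * (n.+1%:R)^-1.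
  move=> m n.
  have hm : f ((2^-1 : R)%:C *: (xs m + xs n)) = 1.
    by rewrite fZ fD (proj1 (hxs m)) (proj1 (hxs n)) half_C.
  have := dle _ hm; rewrite nsZ /= expr0n /= addr0.
  have := nsD (xs m) (xs n); have := nsB (xs m) (xs n).
  have := proj2 (hxs m); have := proj2 (hxs n).
  move=> h1 h2 h3 h4 h5.
  have e4 : 4%:R * ((2^-1 : R) ^+ 2) = 1 by field.
  have h6 := ler_wpM2l (ler0n R 4) h5; rewrite mulrA e4 mul1r in h6.
  clear h5 e4; move: h1 h2 h3 h4 h6.
  move: (ns (xs n)) (ns (xs m)) (ns (xs m - xs n)) (ns (xs m + xs n)) (rip (xs m) (xs n)) (m.+1%:R^-1 : R) (n.+1%:R^-1 : R) => a b c g r p q.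
  lra.
have cau : forall e : R, 0 < e -> exists n0 : nat, forall m n : nat,
     (n0 <= m)%N -> (n0 <= n)%N -> hnorm ip (xs m - xs n) < e.
  move=> e e0; have [n0 hn0] := @inv_small R _ (divr_gt0 (exprn_gt0 2 e0) (ltr0Sn R 3)).
  exists n0 => m n hm hn; apply: hn_lt_of_ns => //.
  have := hn0 _ hm; have := hn0 _ hn; have := par m n.
  have : 4%:R * (e ^+ 2 / 4%:R) = e ^+ 2 by field.
  move: (m.+1%:R^-1 : R) (n.+1%:R^-1 : R) (e ^+ 2 / 4%:R) (e ^+ 2) (ns (xs m - xs n)) => p q w ee c.
  lra.
have [z0 hz0] := complete _ cau.
have fz0 : f z0 = 1.
  have key : forall n, f z0 = 1 - f (xs n - z0).
    by move=> n; rewrite fB (proj1 (hxs n)) opprB addrC subrK.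
  have bnd : forall e : R, 0 < e -> exists n, hnorm ip (xs n - z0) < e.
    by move=> e e0; have [n0 hn0] := hz0 e e0; exists n0; apply: hn0.
  apply: ceq.
    apply/eqP; rewrite -subr_eq0; apply/eqP; apply: (@zero_small _ _ `|M|) => e e0.
    have [n hn] := bnd e e0; rewrite (key n) ReD ReN /= addrAC subrr add0r normrN.
    apply: le_trans (fbRe _) _; apply: ler_wpM2l => //; exact: ltW.
  apply: (@zero_small _ _ `|M|) => e e0.
  have [n hn] := bnd e e0; rewrite (key n) ImD ImN /= add0r normrN.
  apply: le_trans (fbIm _) _; apply: ler_wpM2l => //; exact: ltW.
have nsz0 : ns z0 <= d.
  rewrite -subr_le0; apply: (@le_small _ _ (2 + 2 * (d + 1))) => e e0 e1.
  have [n1 hn1] := @inv_small R _ e0; have [n2 hn2] := hz0 e e0.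
  pose n := maxn n1 n2.
  have h1 := hn1 n (leq_maxl _ _); have h2 := hn2 n (leq_maxr _ _).
  have h3 := proj2 (hxs n).
  have h4 : hnorm ip z0 <= hnorm ip (xs n) + hnorm ip (xs n - z0).
    rewrite {1}(_ : z0 = xs n + - (xs n - z0)); last by rewrite opprB addrC subrK.
    by apply: le_trans (hnD _ _) _; rewrite hnN.
  have h5 := hn_sq z0; have h6 := hn_sq (xs n).
  have h7 := hn_ge0 (xs n); have h8 := hn_ge0 (xs n - z0); have h9 := hn_ge0 z0.
  move: h1 h2 h3 h4 h5 h6 h7 h8 h9.
  move: (hnorm ip (xs n)) (hnorm ip (xs n - z0)) (hnorm ip z0) (n.+1%:R^-1 : R) (ns z0) (ns (xs n)) => a dl h p nz nx.
  move=> h1 h2 h3 h4 h5 h6 h7 h8 h9.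
  have h10 : 2 * a <= 1 + a ^+ 2 by have := sqr_ge0 (a - 1); nra.
  have h11 : a <= d + 1 by nra.
  have h12 : h ^+ 2 <= (a + dl) ^+ 2 by nra.
  have h13 : a * dl <= (d + 1) * e by nra.
  have h14 : dl ^+ 2 <= e by nra.
  nra.
have orth : forall k, f k = 0 -> rip z0 k = 0.
  move=> k fk; set r := rip z0 k; set nk := ns k.
  have nk0 : 0 <= nk by exact: ns_ge0.
  pose s := (nk + 1)^-1.
  have s0 : 0 < s by rewrite invr_gt0 ltr_wpDl.
  have nk1 : nk + 1 != 0 by rewrite gt_eqF // ltr_wpDl.
  have hs : s * nk = 1 - s by rewrite /s; field.
  clearbody s.
  have ht := dle (z0 + (- r * s)%:C *: k).
  rewrite fD fZ fk mulr0 addr0 in ht; have {}ht := ht fz0.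
  rewrite nsD nsZ ripZr /= expr0n /= addr0 -/nk -/r in ht.
  have : r ^+ 2 * s * (1 + s) <= 0 by nra.
  have : 0 < s * (1 + s) by nra.
  nra.
have orth2 : forall k, f k = 0 -> ip k z0 = 0.
  move=> k fk; rewrite ipC.
  have -> : ip z0 k = 0.
    apply: ceq => /=; first exact: orth.
    by rewrite Im_rip; apply: orth; rewrite fZ fk mulr0.
  by rewrite conjc0.
have nz : ns z0 != 0.
  apply/negP => /eqP h; move: fz0; rewrite (ns_eq0 _ h) f0 => /eqP.
  by rewrite eq_sym oner_eq0.
exists ((ns z0)^-1%:C *: z0) => x.
have hk : f (x - f x *: z0) = 0 by rewrite fB fZ fz0 mulr1 subrr.
have := orth2 _ hk; rewrite ipB ipZ ipxx => /eqP; rewrite subr_eq0 => /eqP hx.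
rewrite ipZr conjc_real hx mulrA [_ * f x]mulrC -mulrA RC_inv ?mulr1 //.
Qed.

End Riesz.


Lemma adj_exists T : bounded_op ip T -> exists A : V -> V, forall x y, ip (T x) y = ip x (A y).
Proof.
move=> [Tlin [M hM]].
have h : forall y, exists z, forall x, ip (T x) y = ip x z.
  move=> y; apply: (@riesz (fun x => ip (T x) y) (M * hnorm ip y)).
    by move=> a x x'; rewrite Tlin ipDZl.
  move=> x; split.
    apply: le_trans (abs_Re_ip _ _) _; rewrite mulrAC; apply: ler_wpM2r; [exact: hn_ge0 | exact: hM].
  apply: le_trans (abs_Im_ip _ _) _; rewrite mulrAC; apply: ler_wpM2r; [exact: hn_ge0 | exact: hM].
have [A hA] := boolp.choice h. by exists A.
Qed.

Lemma adjointP T : bounded_op ip T -> forall x y, ip (T x) y = ip x (adjoint ip T y).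
Proof.
move=> hT; rewrite /adjoint; case: pselect => [h|h]; first exact: (projT2 (cid h)).
by exfalso; apply: h; exact: adj_exists.
Qed.

Lemma adjoint_uniq T B : bounded_op ip T -> (forall x y, ip (T x) y = ip x (B y)) -> adjoint ip T = B.
Proof.
move=> hT hB; apply: funext => y; apply/eqP; rewrite -subr_eq0; apply/eqP; apply: ip_eq0.
by rewrite ipBr -adjointP // hB subrr.
Qed.

Lemma sa_sym T : bounded_op ip T -> self_adjoint_op ip T -> forall x y, ip (T x) y = ip x (T y).
Proof. by move=> hT hs x y; rewrite adjointP // hs. Qed.


Lemma hn_tri a b c : hnorm ip (a - c) <= hnorm ip (a - b) + hnorm ip (b - c).
Proof. have -> : a - c = (a - b) + (b - c) by rewrite addrA subrK. exact: hnD. Qed.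

Lemma hnB x y : hnorm ip (x - y) <= hnorm ip x + hnorm ip y.
Proof. by apply: le_trans (hnD _ _) _; rewrite hnN. Qed.

Lemma bnd_lin T : bounded_op ip T -> lin T.
Proof. by case. Qed.

Lemma bnd_pos T : bounded_op ip T -> exists M, 0 <= M /\ forall x, hnorm ip (T x) <= M * hnorm ip x.
Proof.
move=> [_ [M hM]]; exists `|M|; split => // x; apply: le_trans (hM x) _.
by apply: ler_wpM2r; [exact: hn_ge0 | exact: ler_norm].
Qed.

Lemma bnd_mk T M : lin T -> (forall x, hnorm ip (T x) <= M * hnorm ip x) -> bounded_op ip T.
Proof. by move=> h1 h2; split => //; exists M. Qed.

Lemma bnd_comp T S : bounded_op ip T -> bounded_op ip S -> bounded_op ip (op_comp T S).
Proof.
move=> hT hS; have [MT [MT0 hMT]] := bnd_pos _ hT; have [MS [MS0 hMS]] := bnd_pos _ hS.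
apply: (@bnd_mk _ (MT * MS)); first exact: lin_comp (bnd_lin _ hT) (bnd_lin _ hS).
move=> x; rewrite /op_comp; apply: le_trans (hMT _) _; rewrite -mulrA; exact: ler_wpM2l.
Qed.

Lemma bnd_add T S : bounded_op ip T -> bounded_op ip S -> bounded_op ip (op_add T S).
Proof.
move=> hT hS; have [MT [MT0 hMT]] := bnd_pos _ hT; have [MS [MS0 hMS]] := bnd_pos _ hS.
apply: (@bnd_mk _ (MT + MS)); first exact: lin_add (bnd_lin _ hT) (bnd_lin _ hS).
move=> x; rewrite /op_add mulrDl; apply: le_trans (hnD _ _) _; exact: lerD.
Qed.

Lemma bnd_sub T S : bounded_op ip T -> bounded_op ip S -> bounded_op ip (op_sub T S).
Proof.
move=> hT hS; have [MT [MT0 hMT]] := bnd_pos _ hT; have [MS [MS0 hMS]] := bnd_pos _ hS.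
apply: (@bnd_mk _ (MT + MS)); first exact: lin_sub (bnd_lin _ hT) (bnd_lin _ hS).
move=> x; rewrite /op_sub mulrDl; apply: le_trans (hnB _ _) _; exact: lerD.
Qed.

Lemma bnd_scale c T : bounded_op ip T -> bounded_op ip (op_scale c T).
Proof.
move=> hT; have [MT [MT0 hMT]] := bnd_pos _ hT.
apply: (@bnd_mk _ (Normc.normc c * MT)); first exact: lin_scale (bnd_lin _ hT).
move=> x; rewrite /op_scale hnZ -mulrA; apply: ler_wpM2l => //.
by rewrite /Normc.normc; case: (c) => a b /=; exact: sqrtr_ge0.
Qed.

Definition h2 : C := (2^-1 : R)%:C.

Lemma h2h2 (v : V) : h2 *: v + h2 *: v = v.
Proof. by rewrite -scalerDl (_ : h2 + h2 = 1) ?scale1r //; apply: ceq => /=; field. Qed.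

Lemma nh2 : Normc.normc h2 = 2^-1.
Proof. by rewrite /Normc.normc /h2 /= expr0n /= addr0 sqrtr_sqr ger0_norm // invr_ge0. Qed.

Lemma conj_h2 : conjc h2 = h2.
Proof. exact: conjc_real. Qed.

Section Sqrt.
Variable S : V -> V.
Hypothesis Slin : lin S.
Hypothesis Ssym : forall x y, ip (S x) y = ip x (S y).
Hypothesis Sb : forall x, hnorm ip (S x) <= hnorm ip x.

Fixpoint Yn (n : nat) : V -> V :=
  if n is n'.+1 then fun x => h2 *: (S (S x) + Yn n' (Yn n' x)) else fun _ => 0.
Fixpoint bt (n : nat) : R := if n is n'.+1 then 2^-1 * (1 + bt n' ^+ 2) else 0.

Lemma Yn_S n x : Yn n.+1 x = h2 *: (S (S x) + Yn n (Yn n x)).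
Proof. by []. Qed.

Lemma Yn_lin n : lin (Yn n).
Proof.
elim: n => [|n IH] /=; first exact: lin_zero.
exact: (lin_scale _ _ (lin_add _ _ (lin_comp _ _ Slin Slin) (lin_comp _ _ IH IH))).
Qed.

Lemma bt_ge0 n : 0 <= bt n.
Proof. elim: n => [|n IH] //=; apply: mulr_ge0; [by rewrite invr_ge0 | by rewrite addr_ge0 ?sqr_ge0]. Qed.

Lemma bt_le1 n : bt n <= 1.
Proof. elim: n => [|n IH] /=; first exact: ler01. have := bt_ge0 n; nra. Qed.

Lemma bt_S n : bt n.+1 = 2^-1 * (1 + bt n ^+ 2).
Proof. by []. Qed.

Lemma bt_rate n : 1 - bt n <= 2 * rate n.
Proof.
have key : (1 - bt n) * n.+2%:R <= 2.
  elim: n => [|n IH]; first by rewrite /= subr0 mul1r.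
  rewrite bt_S half_id -(natr1 n.+2); have := bt_ge0 n; have := bt_le1 n.
  have : (2 : R) <= n.+2%:R by rewrite ler_nat.
  set h := (_ ^-1 : R).
  have hh : 2 * h = 1 by rewrite /h mulfV.
  clearbody h.
  move: IH; move: (bt n) (n.+2%:R : R) => b N IH h1 h2 h3.
  have h4 : 0 <= (2 - (1 - b) * N) * (2 - (1 - b)) by apply: mulr_ge0; nra.
  nra.
have r0 := @rate_gt0 R n; rewrite /rate in r0 *.
have hN : (n.+1%:R : R) <= n.+2%:R by rewrite ler_nat.
have hN0 : (0 : R) < n.+1%:R by rewrite ltr0Sn.
have h1 : n.+1%:R * (n.+1%:R : R)^-1 = 1 by rewrite mulfV // gt_eqF.
have := bt_le1 n.
move: key h1 hN hN0 r0; move: (n.+1%:R : R) (n.+2%:R : R) ((n.+1%:R : R)^-1) (bt n) => a b c d.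
nra.
Qed.

Lemma Yn_bnd n x : hnorm ip (Yn n x) <= bt n * hnorm ip x.
Proof.
elim: n x => [|n IH] x; first by rewrite /= hn0 mul0r.
rewrite Yn_S hnZ nh2 bt_S -mulrA; apply: ler_wpM2l; first by rewrite invr_ge0.
apply: le_trans (hnD _ _) _; rewrite mulrDl mul1r; apply: lerD.
  exact: le_trans (Sb _) (Sb _).
apply: le_trans (IH _) _; rewrite expr2 -mulrA; apply: ler_wpM2l; first exact: bt_ge0.
exact: IH.
Qed.

Lemma Yn_diff n x : hnorm ip (Yn n.+1 x - Yn n x) <= (bt n.+1 - bt n) * hnorm ip x.
Proof.
elim: n x => [|n IH] x.
  rewrite Yn_S /= !subr0 addr0 hnZ nh2 expr0n /= addr0 mulr1; apply: ler_wpM2l.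
    by rewrite invr_ge0.
  exact: le_trans (Sb _) (Sb _).
have -> : Yn n.+2 x - Yn n.+1 x = h2 *: (Yn n.+1 (Yn n.+1 x) - Yn n (Yn n x)).
  rewrite [Yn n.+2 x]Yn_S [X in _ - X = _]Yn_S.
  by rewrite -scalerBr opprD addrACA subrr add0r.
have -> : Yn n.+1 (Yn n.+1 x) - Yn n (Yn n x)
    = Yn n.+1 (Yn n.+1 x - Yn n x) + (Yn n.+1 (Yn n x) - Yn n (Yn n x)).
  by rewrite (linB (Yn_lin n.+1)) addrA subrK.
rewrite hnZ nh2.
have h1 := Yn_bnd n.+1 (Yn n.+1 x - Yn n x).
have h2 := IH x; have h3 := IH (Yn n x); have h4 := Yn_bnd n x.
have h5 := hnD (Yn n.+1 (Yn n.+1 x - Yn n x)) (Yn n.+1 (Yn n x) - Yn n (Yn n x)).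
have e1 := bt_S n.+1; have e2 := bt_S n.
have b0 := bt_ge0 n; have b1 := bt_ge0 n.+1.
have d0 : 0 <= bt n.+1 - bt n by rewrite e2 subr_ge0; have := bt_le1 n; nra.
have hx := hn_ge0 x.
have g1 : hnorm ip (Yn n.+1 (Yn n.+1 x - Yn n x)) <= bt n.+1 * ((bt n.+1 - bt n) * hnorm ip x).
  by apply: le_trans h1 _; apply: ler_wpM2l.
have g2 : hnorm ip (Yn n.+1 (Yn n x) - Yn n (Yn n x)) <= (bt n.+1 - bt n) * (bt n * hnorm ip x).
  by apply: le_trans h3 _; apply: ler_wpM2l.
move: h5 g1 g2 e1 e2 b0 b1 d0 hx.
move: (hnorm ip (Yn n.+1 (Yn n.+1 x - Yn n x) + (Yn n.+1 (Yn n x) - Yn n (Yn n x))))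
  (hnorm ip (Yn n.+1 (Yn n.+1 x - Yn n x))) (hnorm ip (Yn n.+1 (Yn n x) - Yn n (Yn n x)))
  (bt n.+2) (bt n.+1) (bt n) (hnorm ip x) => A B D b2 b1 b0 hx.
move=> h5 g1 g2 e1 e2 c0 c1 d0 hx0.
have i2 : (0 : R) <= 2^-1 by rewrite invr_ge0.
have : 2^-1 * A <= 2^-1 * ((b1 - b0) * (b1 + b0) * hx) by apply: ler_wpM2l => //; nra.
rewrite e1; nra.
Qed.

Lemma Yn_tele n k x : hnorm ip (Yn (n + k) x - Yn n x) <= (bt (n + k) - bt n) * hnorm ip x.
Proof.
elim: k => [|k IH]; first by rewrite addn0 !subrr hn0 mul0r.
rewrite addnS; apply: le_trans (hn_tri _ (Yn (n + k) x) _) _.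
have h1 := Yn_diff (n + k) x.
by apply: le_trans (lerD h1 IH) _; rewrite -mulrDl addrA subrK.
Qed.

Lemma Yn_cauchy n m x : (n <= m)%N -> hnorm ip (Yn m x - Yn n x) <= 2 * rate n * hnorm ip x.
Proof.
move=> hnm; rewrite -(subnKC hnm); apply: le_trans (Yn_tele _ _ _) _.
apply: ler_wpM2r; first exact: hn_ge0.
have := bt_rate n; have := bt_le1 (n + (m - n)); lra.
Qed.

Lemma hn_le_tri a b : hnorm ip a <= hnorm ip b + hnorm ip (b - a).
Proof. rewrite {1}(_ : a = b - (b - a)); last by rewrite opprB addrC subrK. exact: hnB. Qed.

Lemma vec_eq_rate p q (K : R) : (forall n, hnorm ip (p - q) <= K * rate n) -> p = q.
Proof.
move=> h; apply/eqP; rewrite -subr_eq0; apply/eqP; apply: hn_eq0.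
by apply: (real_rate0 _ K) => n; rewrite ger0_norm ?hn_ge0.
Qed.

Lemma Yn_lim x : exists l, forall e : R, 0 < e -> exists n0, forall n, (n0 <= n)%N -> hnorm ip (Yn n x - l) < e.
Proof.
apply: complete => e e0.
have [n0 hn0] := rate_small (2 * hnorm ip x) e e0.
have gen : forall a b, (n0 <= a)%N -> (a <= b)%N -> hnorm ip (Yn b x - Yn a x) < e.
  move=> a b ha hab; apply: le_lt_trans (Yn_cauchy a b x hab) _.
  apply: le_lt_trans _ (hn0 n0 (leqnn _)).
  rewrite mulrAC; apply: ler_wpM2l; first by rewrite mulr_ge0 ?hn_ge0.
  exact: rate_mono.
exists n0 => m n hm hn; case: (leqP m n) => hmn.
  by rewrite hnBC; apply: gen.
by apply: gen => //; apply: ltnW.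
Qed.

Definition Y : V -> V := fun x => projT1 (cid (Yn_lim x)).

Lemma YP x : forall e : R, 0 < e -> exists n0, forall n, (n0 <= n)%N -> hnorm ip (Yn n x - Y x) < e.
Proof. exact: (projT2 (cid (Yn_lim x))). Qed.

Lemma c2r n : (0 : R) <= 2 * rate n.
Proof. by apply: mulr_ge0 => //; exact: ltW (rate_gt0 n). Qed.

Lemma c2rh n x : 0 <= 2 * rate n * hnorm ip x.
Proof. by apply: mulr_ge0; [exact: c2r | exact: hn_ge0]. Qed.

Lemma Yconv n x : hnorm ip (Yn n x - Y x) <= 2 * rate n * hnorm ip x.
Proof.
rewrite -subr_le0; apply: (@le_small R _ 1) => e e0 _.
have [n0 hn0] := YP x e e0.
pose m := maxn n n0.
have h1 := Yn_cauchy n m x (leq_maxl _ _).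
have h2 := hn0 m (leq_maxr _ _).
have h3 := hn_tri (Yn n x) (Yn m x) (Y x).
rewrite hnBC in h1.
move: h1 h2 h3; move: (hnorm ip (Yn n x - Yn m x)) (hnorm ip (Yn m x - Y x)) (hnorm ip (Yn n x - Y x)) (2 * rate n * hnorm ip x) => a b c d.
lra.
Qed.

Lemma Yconv' n x : hnorm ip (Y x - Yn n x) <= 2 * rate n * hnorm ip x.
Proof. by rewrite hnBC; exact: Yconv. Qed.

Lemma Ylin : lin Y.
Proof.
move=> a x y.
apply: (vec_eq_rate _ _ (2 * hnorm ip (a *: x + y) + Normc.normc a * (2 * hnorm ip x) + 2 * hnorm ip y)) => n.
apply: le_trans (hn_tri _ (Yn n (a *: x + y)) _) _.
have e : Yn n (a *: x + y) - (a *: Y x + Y y) = a *: (Yn n x - Y x) + (Yn n y - Y y).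
  by rewrite (Yn_lin n) opprD addrACA -scalerBr.
rewrite e; clear e.
have h1 := Yconv' n (a *: x + y).
have h2 := hnD (a *: (Yn n x - Y x)) (Yn n y - Y y).
rewrite hnZ in h2.
have h3 := Yconv n x; have h4 := Yconv n y.
have na : 0 <= Normc.normc a by rewrite /Normc.normc; case: (a) => ? ? /=; exact: sqrtr_ge0.
have h5 : Normc.normc a * hnorm ip (Yn n x - Y x) <= Normc.normc a * (2 * rate n * hnorm ip x) by exact: ler_wpM2l.
have r0 := @rate_gt0 R n.
move: h1 h2 h3 h4 h5 na r0.
move: (hnorm ip (Y (a *: x + y) - Yn n (a *: x + y))) (hnorm ip (a *: (Yn n x - Y x) + (Yn n y - Y y))) (hnorm ip (Yn n x - Y x)) (hnorm ip (Yn n y - Y y)) (Normc.normc a) (rate n) (hnorm ip (a *: x + y)) (hnorm ip x) (hnorm ip y) => A B D E na r X hx hy.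
move=> h1 h2 h3 h4 h5 h6 h7.
nra.
Qed.

Lemma Ybnd x : hnorm ip (Y x) <= hnorm ip x.
Proof.
apply: (real_rate_le _ _ (2 * hnorm ip x)) => n.
apply: le_trans (hn_le_tri _ (Yn n x)) _.
apply: lerD; last by rewrite mulrAC; exact: Yconv.
apply: le_trans (Yn_bnd n x) _; rewrite ler_piMl ?hn_ge0 //; exact: bt_le1.
Qed.

Lemma Yfix x : S (S x) + Y (Y x) = Y x + Y x.
Proof.
apply: (vec_eq_rate _ _ (8 * hnorm ip x)) => n.
have e1 : S (S x) + Yn n (Yn n x) = Yn n.+1 x + Yn n.+1 x by rewrite Yn_S h2h2.
apply: le_trans (hn_tri _ (S (S x) + Yn n (Yn n x)) _) _.
rewrite opprD addrACA subrr add0r e1 opprD addrACA.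
have g1 := hn_tri (Y (Y x)) (Yn n (Y x)) (Yn n (Yn n x)).
rewrite -(linB (Yn_lin n)) in g1.
have g2 := Yconv' n (Y x).
have g3 := Yn_bnd n (Y x - Yn n x).
have g4 := Yconv' n x.
have g5 := hnD (Yn n.+1 x - Y x) (Yn n.+1 x - Y x).
have g6 := Yconv n.+1 x.
have g7 := @rate_mono R n n.+1 (leqnSn n).
have g8 := Ybnd x; have g9 := bt_le1 n; have g10 := bt_ge0 n.
have r0 := @rate_gt0 R n.
have g11 : bt n * hnorm ip (Y x - Yn n x) <= 2 * rate n * hnorm ip x.
  apply: le_trans (ler_wpM2l g10 g4) _; rewrite ler_piMl //.
  exact: c2rh.
have g12 : 2 * rate n * hnorm ip (Y x) <= 2 * rate n * hnorm ip x.
  by apply: ler_wpM2l => //; exact: c2r.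
have g13 : 2 * rate n.+1 * hnorm ip x <= 2 * rate n * hnorm ip x.
  by apply: ler_wpM2r; [exact: hn_ge0 | rewrite ler_pM2l //; exact: rate_mono].
rewrite (_ : 8 * hnorm ip x * rate n = 4 * (2 * rate n * hnorm ip x)); last by ring.
move: g1 g2 g3 g5 g6 g11 g12 g13.
move: (hnorm ip (Y (Y x) - Yn n (Yn n x))) (hnorm ip (Y (Y x) - Yn n (Y x))) (hnorm ip (Yn n (Y x - Yn n x)))
  (hnorm ip (Yn n.+1 x - Y x + (Yn n.+1 x - Y x))) (hnorm ip (Yn n.+1 x - Y x))
  (bt n * hnorm ip (Y x - Yn n x)) (2 * rate n * hnorm ip (Y x)) (2 * rate n.+1 * hnorm ip x) (2 * rate n * hnorm ip x) => a b c d f g h i j.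
move=> *; lra.
Qed.

Lemma Yn_Scomm n x : S (Yn n x) = Yn n (S x).
Proof.
elim: n x => [|n IH] x; first exact: lin0 Slin.
by rewrite !Yn_S (linZ Slin) (linD Slin) IH IH.
Qed.

Lemma YS x : S (Y x) = Y (S x).
Proof.
apply: (vec_eq_rate _ _ (4 * hnorm ip x)) => n.
apply: le_trans (hn_tri _ (S (Yn n x)) _) _.
rewrite -(linB Slin) Yn_Scomm.
have g1 := Sb (Y x - Yn n x); have g2 := Yconv' n x; have g3 := Yconv n (S x).
have g4 : 2 * rate n * hnorm ip (S x) <= 2 * rate n * hnorm ip x.
  by apply: ler_wpM2l => //; exact: c2r.
have -> : 4 * hnorm ip x * rate n = 2 * (2 * rate n * hnorm ip x) by ring.
lra.
Qed.

Lemma Yn_sym n x y : ip (Yn n x) y = ip x (Yn n y).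
Proof.
elim: n x y => [|n IH] x y; first by rewrite /= ip0l ip0r.
by rewrite !Yn_S ipZ ipZr conj_h2 ipD ipDr Ssym Ssym IH IH.
Qed.

Lemma Ysym x y : ip (Y x) y = ip x (Y y).
Proof.
apply/eqP; rewrite -subr_eq0; apply/eqP.
have key : forall n, ip (Y x) y - ip x (Y y) = ip (Y x - Yn n x) y + ip x (Yn n y - Y y).
  by move=> n; rewrite ipB ipBr Yn_sym addrA subrK.
have bnd : forall n, hnorm ip (Y x - Yn n x) * hnorm ip y + hnorm ip x * hnorm ip (Yn n y - Y y)
   <= (4 * hnorm ip x * hnorm ip y) * rate n.
  move=> n; have g1 := Yconv' n x; have g2 := Yconv n y.
  have hy := hn_ge0 y; have hx := hn_ge0 x.
  have g3 := ler_wpM2r hy g1; have g4 := ler_wpM2l hx g2.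
  move: g3 g4; move: (hnorm ip (Y x - Yn n x) * hnorm ip y) (hnorm ip x * hnorm ip (Yn n y - Y y)) => a b.
  move=> g3 g4.
  have -> : 4 * hnorm ip x * hnorm ip y * rate n = 2 * rate n * hnorm ip x * hnorm ip y + hnorm ip x * (2 * rate n * hnorm ip y) by ring.
  exact: lerD g3 g4.
apply: ceq.
  apply: (real_rate0 _ (4 * hnorm ip x * hnorm ip y)) => n.
  rewrite (key n) ReD; apply: le_trans (ler_normD _ _) _; apply: le_trans _ (bnd n).
  by apply: lerD; apply: abs_Re_ip.
apply: (real_rate0 _ (4 * hnorm ip x * hnorm ip y)) => n.
rewrite (key n) ImD; apply: le_trans (ler_normD _ _) _; apply: le_trans _ (bnd n).
by apply: lerD; apply: abs_Im_ip.
Qed.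

Definition Rop : V -> V := fun x => x - Y x.
Definition Uop : V -> V := fun x => S x + 'i%C *: Rop x.
Definition Uop' : V -> V := fun x => S x - 'i%C *: Rop x.

Lemma Rlin : lin Rop.
Proof. exact: (lin_sub _ _ lin_id Ylin). Qed.

Lemma Rbnd x : hnorm ip (Rop x) <= 2 * hnorm ip x.
Proof. apply: le_trans (hnB _ _) _; have := Ybnd x; lra. Qed.

Lemma Ubnd : bounded_op ip Uop.
Proof.
apply: (@bnd_mk _ 3); first exact: (lin_add _ _ Slin (lin_scale _ _ Rlin)).
move=> x; apply: le_trans (hnD _ _) _; rewrite hn_i; have := Sb x; have := Rbnd x; lra.
Qed.

Lemma U'bnd : bounded_op ip Uop'.
Proof.
apply: (@bnd_mk _ 3); first exact: (lin_sub _ _ Slin (lin_scale _ _ Rlin)).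
move=> x; apply: le_trans (hnB _ _) _; rewrite hn_i; have := Sb x; have := Rbnd x; lra.
Qed.

Lemma Rsym x y : ip (Rop x) y = ip x (Rop y).
Proof. by rewrite /Rop ipB ipBr Ysym. Qed.

Lemma RS x : S (Rop x) = Rop (S x).
Proof. by rewrite /Rop (linB Slin) YS. Qed.

Lemma ii : 'i%C * 'i%C = -1 :> C.
Proof. by apply: ceq => /=; lra. Qed.

Lemma ci : conjc 'i%C = - 'i%C :> C.
Proof. by apply: ceq => /=; lra. Qed.

Lemma U_adj : adjoint ip Uop = Uop'.
Proof.
apply: adjoint_uniq; first exact: Ubnd.
move=> x y; rewrite /Uop /Uop' ipD ipZ ipBr ipZr ci Ssym Rsym.
by rewrite mulNr opprK.
Qed.

Lemma aux_cancel (a b x : V) : a + (x - (a + b) + b) = x.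
Proof. by rewrite opprD -(addrA x) subrK addrC addNKr. Qed.

Lemma RR x : Rop (Rop x) = x - (Y x + Y x) + Y (Y x).
Proof. by rewrite /Rop (linB Ylin) opprB opprD !addrA addrAC. Qed.

Lemma U'U x : Uop' (Uop x) = x.
Proof.
rewrite /Uop' /Uop (linD Slin (S x)) (linZ Slin _ (Rop x)) (linD Rlin (S x)) (linZ Rlin _ (Rop x)) RS (scalerDr _ (Rop (S x))) scalerA ii scaleN1r.
rewrite opprD opprK addrA addrK RR -Yfix.
exact: aux_cancel.
Qed.

Lemma UU' x : Uop (Uop' x) = x.
Proof.
rewrite /Uop' /Uop (linB Slin (S x)) (linZ Slin _ (Rop x)) (linB Rlin (S x)) (linZ Rlin _ (Rop x)) RS (scalerBr _ (Rop (S x))) scalerA ii scaleN1r.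
rewrite opprK addrA subrK RR -Yfix.
exact: aux_cancel.
Qed.

Lemma U_unitary : unitary ip Uop.
Proof.
split; first exact: Ubnd.
rewrite U_adj; split; apply: funext => x; [exact: U'U | exact: UU'].
Qed.

Lemma S_half : S = op_scale (2%:R^-1) (op_add Uop (adjoint ip Uop)).
Proof.
rewrite U_adj; apply: funext => x; rewrite /op_scale /op_add /Uop /Uop'.
rewrite addrACA subrr addr0 -{2 3}[S x]scale1r -scalerDl scalerA.
by rewrite mulVf ?scale1r // pnatr_eq0.
Qed.

End Sqrt.

Lemma normcR (r : R) : Normc.normc (r%:C) = `|r|.
Proof. by rewrite /Normc.normc /= expr0n /= addr0 sqrtr_sqr. Qed.

Lemma opnorm_le T : bounded_op ip T -> opnorm ip T <= 1 -> forall x, hnorm ip (T x) <= hnorm ip x.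
Proof.
move=> hT h1.
have [M [M0 hM]] := bnd_pos _ hT.
rewrite /opnorm in h1.
have hs : has_sup [set hnorm ip (T x) | x in [set x : V | hnorm ip x <= 1]]%classic.
  split.
    by exists (hnorm ip (T 0)); exists 0 => //=; rewrite hn0 ler01.
  exists M => y [x hx <-]; apply: le_trans (hM x) _; rewrite ler_piMr //.
have ub1 : forall x, hnorm ip x <= 1 -> hnorm ip (T x) <= 1.
  move=> x hx; apply: le_trans h1; apply: sup_upper_bound hs _ _; by exists x.
move=> x; have [h0|hne] := eqVneq (hnorm ip x) 0.
  by rewrite (hn_eq0 _ h0) (lin0 (bnd_lin _ hT)) hn0.
have c0 : 0 < hnorm ip x by rewrite lt_neqAle eq_sym hne hn_ge0.
have h := ub1 ((hnorm ip x)^-1%:C *: x).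
rewrite hnZ normcR ger0_norm ?invr_ge0 ?hn_ge0 // mulVf // lexx in h.
have {}h := h isT.
rewrite (linZ (bnd_lin _ hT)) hnZ normcR ger0_norm ?invr_ge0 ?hn_ge0 // in h.
have := ler_wpM2l (ltW c0) h; rewrite mulrA mulfV // mul1r mulr1 //.
Qed.


Lemma decomp S : bounded_op ip S -> self_adjoint_op ip S -> opnorm ip S <= 1 ->
  exists U, [/\ unitary ip U, bounded_op ip (adjoint ip U) &
     S = op_scale (2%:R^-1) (op_add U (adjoint ip U))].
Proof.
move=> hS hsa h1.
have Slin := bnd_lin _ hS; have Ssym := sa_sym _ hS hsa; have Sb := opnorm_le _ hS h1.
exists (Uop S Slin Sb); split.
- exact: (U_unitary S Slin Ssym Sb).
- by rewrite (U_adj S Slin Ssym Sb); exact: U'bnd.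
- exact: (S_half S Slin Ssym Sb).
Qed.

Lemma h2E : (2%:R^-1 : C) = h2.
Proof. by rewrite /h2 fmorphV /= rmorph_nat. Qed.

Lemma normc_conj (z : C) : Normc.normc (conjc z) = Normc.normc z.
Proof. by case: z => a b; rewrite /Normc.normc /= sqrrN. Qed.

Lemma normc_expi (t : R) : Normc.normc (expi t) = 1.
Proof. by rewrite /expi /Normc.normc cos2Dsin2 sqrtr1. Qed.

Lemma expi0 : expi 0 = 1 :> C.
Proof. by rewrite /expi cos0 sin0. Qed.

Lemma ReOp_scale (A : V -> V) (s e : C) : bounded_op ip A ->
  (forall x y, ip (A x) y = ip x (s *: A y)) ->
  ReOp ip (op_scale e A) = op_scale (h2 * (e + conjc e * s)) A.
Proof.
move=> hA hs; rewrite /ReOp.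
have -> : adjoint ip (op_scale e A) = op_scale (conjc e * s) A.
  apply: adjoint_uniq; first exact: bnd_scale.
  move=> x y; rewrite /op_scale ipZ hs !ipZr rmorphM /= conjcK mulrA.
  by [].
apply: funext => x; rewrite /op_scale /op_add -scalerDl scalerA h2E //.
Qed.

Lemma N_ReOp_le (N : (V -> V) -> R) (A : V -> V) (s e : C) :
  is_norm_on_B ip N -> bounded_op ip A ->
  (forall x y, ip (A x) y = ip x (s *: A y)) -> Normc.normc s = 1 -> Normc.normc e = 1 ->
  N (ReOp ip (op_scale e A)) <= N A.
Proof.
move=> [hN0 _ hNZ _] hA hs ns1 ne1.
rewrite (ReOp_scale _ _ _ hA hs) hNZ //; apply: ler_piMl; first exact: hN0.
rewrite Normc.normcM nh2.
have := le_normcD e (conjc e * s); rewrite Normc.normcM normc_conj ne1 ns1 mulr1.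
move=> h; have i2 : (0 : R) <= 2^-1 by rewrite invr_ge0.
apply: le_trans (ler_wpM2l i2 h) _.
by rewrite (_ : (1 + 1 : R) = 2) // mulVf.
Qed.

Lemma wN_le (N : (V -> V) -> R) (A : V -> V) (s : C) :
  is_norm_on_B ip N -> bounded_op ip A ->
  (forall x y, ip (A x) y = ip x (s *: A y)) -> Normc.normc s = 1 ->
  (wN ip N A <= (N A)%:E)%E.
Proof.
move=> hN hA hs ns1; apply: ge_ereal_sup => y [t _ <-]; rewrite lee_fin.
exact: (N_ReOp_le _ _ _ _ hN hA hs ns1 (normc_expi t)).
Qed.

Lemma wN_ge (N : (V -> V) -> R) T : self_adjoint_op ip T -> ((N T)%:E <= wN ip N T)%E.
Proof.
move=> hsa; apply: ereal_sup_ubound; exists 0 => //.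
congr (_ %:E); congr (N _).
have e1 : op_scale 1 T = T by apply: funext => y; rewrite /op_scale scale1r.
rewrite expi0 e1 /ReOp hsa; apply: funext => x; rewrite /op_scale /op_add.
by rewrite -{1 2}[T x]scale1r -scalerDl scalerA mulVf ?scale1r // pnatr_eq0.
Qed.

Lemma N_sub_le (N : (V -> V) -> R) P Q : is_norm_on_B ip N -> bounded_op ip P -> bounded_op ip Q ->
  N (op_sub P Q) <= N P + N Q.
Proof.
move=> hN hP hQ; have [hN0 _ hNZ hND] := hN.
have -> : op_sub P Q = op_add P (op_scale (-1) Q).
  by apply: funext => x; rewrite /op_sub /op_add /op_scale scaleN1r.
apply: le_trans (hND _ _ hP (bnd_scale _ _ hQ)) _.
by rewrite hNZ // normcN Normc.normc1 mul1r.
Qed.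

Lemma N_comm_bound (N : (V -> V) -> R) T S U : algebra_norm ip N ->
  bounded_op ip T -> bounded_op ip U -> bounded_op ip (adjoint ip U) ->
  S = op_scale (2%:R^-1) (op_add U (adjoint ip U)) ->
  N (op_add (op_comp T S) (op_comp S T)) <= N T * (N U + N (adjoint ip U)) /\
  N (op_sub (op_comp T S) (op_comp S T)) <= N T * (N U + N (adjoint ip U)).
Proof.
move=> [hN hNM] hT hU hU' eS.
have [hN0 _ hNZ hND] := hN.
move: hU' eS; set U' := adjoint ip U => hU' eS.
have Tlin := bnd_lin _ hT.
have nh : Normc.normc (2%:R^-1 : C) = 2^-1 by rewrite h2E nh2.
have e1 : op_add (op_comp T S) (op_comp S T) = op_scale (2%:R^-1)
    (op_add (op_add (op_comp T U) (op_comp U T)) (op_add (op_comp T U') (op_comp U' T))).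
  rewrite eS; apply: funext => x; rewrite /op_add /op_comp /op_scale (linZ Tlin) (linD Tlin) -scalerDr.
  by congr (_ *: _); rewrite addrACA.
have e2 : op_sub (op_comp T S) (op_comp S T) = op_scale (2%:R^-1)
    (op_add (op_sub (op_comp T U) (op_comp U T)) (op_sub (op_comp T U') (op_comp U' T))).
  rewrite eS; apply: funext => x; rewrite /op_sub /op_add /op_comp /op_scale (linZ Tlin) (linD Tlin) -scalerBr.
  by congr (_ *: _); rewrite opprD addrACA.
have b1 := bnd_comp _ _ hT hU; have b2 := bnd_comp _ _ hU hT.
have b3 := bnd_comp _ _ hT hU'; have b4 := bnd_comp _ _ hU' hT.
have m1 := hNM _ _ hT hU; have m2 := hNM _ _ hU hT.
have m3 := hNM _ _ hT hU'; have m4 := hNM _ _ hU' hT.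
have key : forall X, X <= N T * N U + N U * N T + (N T * N U' + N U' * N T) ->
    2^-1 * X <= N T * (N U + N U').
  move=> X hX.
  have -> : N T * (N U + N U') = 2^-1 * (N T * N U + N U * N T + (N T * N U' + N U' * N T)) by field.
  by apply: ler_wpM2l => //; rewrite invr_ge0.
split.
  rewrite e1 hNZ; last by apply: bnd_add; apply: bnd_add.
  rewrite nh; apply: key.
  apply: le_trans (hND _ _ (bnd_add _ _ b1 b2) (bnd_add _ _ b3 b4)) _.
  by apply: lerD; apply: le_trans (hND _ _ _ _) _ => //; apply: lerD.
rewrite e2 hNZ; last by apply: bnd_add; apply: bnd_sub.
rewrite nh; apply: key.
apply: le_trans (hND _ _ (bnd_sub _ _ b1 b2) (bnd_sub _ _ b3 b4)) _.
by apply: lerD; apply: le_trans (N_sub_le _ _ _ hN _ _) _ => //; apply: lerD.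
Qed.

Lemma main_sec (N : (V -> V) -> R) (hNalg : algebra_norm ip N)
  (T S : V -> V) (hT : bounded_op ip T) (hS : bounded_op ip S)
  (hTsa : self_adjoint_op ip T) (hSsa : self_adjoint_op ip S)
  (hT1 : opnorm ip T <= 1) (hS1 : opnorm ip S <= 1) :
  ((wN ip N (op_add (op_comp T S) (op_comp S T))
     <= Order.min (wN ip N T) (wN ip N S) * supU_sum ip N)%E /\
   (wN ip N (op_sub (op_comp T S) (op_comp S T))
     <= Order.min (wN ip N T) (wN ip N S) * supU_sum ip N)%E) /\
  (self_adjoint_norm ip N ->
   (wN ip N (op_add (op_comp T S) (op_comp S T))
     <= 2%:E * (Order.min (N T) (N S))%:E * supU ip N)%E /\
   (wN ip N (op_sub (op_comp T S) (op_comp S T))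
     <= 2%:E * (Order.min (N T) (N S))%:E * supU ip N)%E).
Proof.
have [hN hNM] := hNalg; have [hN0 _ hNZ hND] := hN.
have Tsym := sa_sym _ hT hTsa; have Ssym := sa_sym _ hS hSsa.
have [U1 [hU1 hU1' eS]] := decomp _ hS hSsa hS1.
have [U2 [hU2 hU2' eT]] := decomp _ hT hTsa hT1.
have hU1b := proj1 hU1; have hU2b := proj1 hU2.
have hA : bounded_op ip (op_add (op_comp T S) (op_comp S T)).
  by apply: bnd_add; apply: bnd_comp.
have hB : bounded_op ip (op_sub (op_comp T S) (op_comp S T)).
  by apply: bnd_sub; apply: bnd_comp.
have sA : forall x y, ip (op_add (op_comp T S) (op_comp S T) x) y
    = ip x (1 *: op_add (op_comp T S) (op_comp S T) y).
  move=> x y; rewrite scale1r /op_add /op_comp ipD ipDr !Tsym !Ssym !Tsym.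
  by rewrite addrC.
have sB : forall x y, ip (op_sub (op_comp T S) (op_comp S T) x) y
    = ip x ((-1) *: op_sub (op_comp T S) (op_comp S T) y).
  move=> x y; rewrite ipZr rmorphN1 mulN1r /op_sub /op_comp ipB ipBr !Tsym !Ssym !Tsym.
  by rewrite opprB.
have wA := wN_le N _ 1 hN hA sA (@Normc.normc1 R).
have wB : (wN ip N (op_sub (op_comp T S) (op_comp S T))
     <= (N (op_sub (op_comp T S) (op_comp S T)))%:E)%E.
  by apply: (wN_le N _ (-1) hN hB sB); rewrite normcN Normc.normc1.
have [cA1 cB1] := N_comm_bound N T S U1 hNalg hT hU1b hU1' eS.
have [cA2 cB2] := N_comm_bound N S T U2 hNalg hS hU2b hU2' eT.
have eA : op_add (op_comp S T) (op_comp T S) = op_add (op_comp T S) (op_comp S T).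
  by apply: funext => x; rewrite /op_add addrC.
have eB : op_sub (op_comp S T) (op_comp T S) = op_scale (-1) (op_sub (op_comp T S) (op_comp S T)).
  by apply: funext => x; rewrite /op_sub /op_scale scaleN1r opprB.
rewrite eA in cA2; rewrite eB hNZ // normcN Normc.normc1 mul1r in cB2.
have wT := wN_ge N T hTsa; have wS := wN_ge N S hSsa.
have nT0 := hN0 _ hT; have nS0 := hN0 _ hS.
have u10 := hN0 _ hU1b; have u1'0 := hN0 _ hU1'.
have u20 := hN0 _ hU2b; have u2'0 := hN0 _ hU2'.
have su1 : ((N U1 + N (adjoint ip U1))%:E <= supU_sum ip N)%E.
  by apply: ereal_sup_ubound; exists U1.
have su2 : ((N U2 + N (adjoint ip U2))%:E <= supU_sum ip N)%E.
  by apply: ereal_sup_ubound; exists U2.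
split.
  split.
    by apply: (efin1 _ _ _ _ _ _ _ _ _ _ wA cA1 cA2) => //; apply: addr_ge0.
  by apply: (efin1 _ _ _ _ _ _ _ _ _ _ wB cB1 cB2) => //; apply: addr_ge0.
move=> hsan.
have v1 : ((N U1)%:E <= supU ip N)%E by apply: ereal_sup_ubound; exists U1.
have v2 : ((N U2)%:E <= supU ip N)%E by apply: ereal_sup_ubound; exists U2.
rewrite (hsan _ hU1b) in cA1 cB1; rewrite (hsan _ hU2b) in cA2 cB2.
have t1 : forall a b : R, a * (b + b) = a * (2 * b) by move=> a b; rewrite mulr2n mulrDl mul1r.
rewrite !t1 in cA1 cB1 cA2 cB2.
split.
  exact: (efin2 _ _ _ _ _ _ _ _ wA cA1 cA2).
exact: (efin2 _ _ _ _ _ _ _ _ wB cB1 cB2).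
Qed.


End H.


Theorem theorem2p6 (R : realType) (V : lmodType R[i]) (ip : V -> V -> R[i])
  (hH : is_hilbert ip) (N : (V -> V) -> R)
  (hNalg : algebra_norm ip N) (hNwui : weakly_unitarily_invariant ip N)
  (T S : V -> V) (hT : bounded_op ip T) (hS : bounded_op ip S)
  (hTsa : self_adjoint_op ip T) (hSsa : self_adjoint_op ip S)
  (hT1 : opnorm ip T <= 1) (hS1 : opnorm ip S <= 1) :
  ((wN ip N (op_add (op_comp T S) (op_comp S T))
     <= Order.min (wN ip N T) (wN ip N S) * supU_sum ip N)%E /\
   (wN ip N (op_sub (op_comp T S) (op_comp S T))
     <= Order.min (wN ip N T) (wN ip N S) * supU_sum ip N)%E) /\
  (self_adjoint_norm ip N ->
   (wN ip N (op_add (op_comp T S) (op_comp S T))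
     <= 2%:E * (Order.min (N T) (N S))%:E * supU ip N)%E /\
   (wN ip N (op_sub (op_comp T S) (op_comp S T))
     <= 2%:E * (Order.min (N T) (N S))%:E * supU ip N)%E).
Proof.
case: hH => ipDZl ipC ip_ge0 ip_eq0 complete.
exact: (@main_sec R V ip ipDZl ipC ip_ge0 ip_eq0 complete N hNalg T S hT hS hTsa hSsa hT1 hS1).
Qed.
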